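(* Let $d\ge 2$, let $\rho$ be a density operator on $\mathbb{C}^d$, and let $\{|i_m\rangle\}_{i=1}^d$, $m=1,\dots,M$, be $M$ mutually unbiased orthonormal bases of $\mathbb{C}^d$, with $p_{i_m}=\langle i_m|\rho|i_m\rangle$. Let $C>0$ be any number with $\sum_{m=1}^M\sum_{i=1}^d p_{i_m}^2\le C$ (for example $C=\operatorname{Tr}(\rho^2)+\frac{M-1}{d}$). Put $K=\lfloor M/C\rfloor$ and $a=M/C-K$. Then $$\sum_{m=1}^M H\{p_{i_m};i\}\ \ge\ aC(K+1)\log_2(K+1)+(1-a)CK\log_2K.$$
   Context: Orthonormal bases $\{|i_m\rangle\}_{i=1}^d$, $m=1,\dots,M$, of $\mathbb{C}^d$ are mutually unbiased if $|\langle i_m|j_n\rangle|^2=1/d$ for all $i,j$ and all $m\ne n$. $H\{p_{i_m};i\}=-\sum_{i=1}^d p_{i_m}\log_2 p_{i_m}$ is the Shannon entropy of the outcome distribution in the $m$th basis, with the convention $0\log_2 0=0$. *)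

(* Defs.v *)
From mathcomp Require Import all_boot all_order all_algebra.
From mathcomp Require Export complex.
From mathcomp Require Import reals exp.
Import GRing.Theory Num.Theory.
Local Open Scope ring_scope.

Set Implicit Arguments.
Unset Strict Implicit.
Unset Printing Implicit Defensive.

Section Defs.
Variable R : realType.
Variable d : nat.

Definition cinner (u v : 'cV[R[i]]_d) : R[i] :=
  \sum_(k < d) (u k 0)^* * v k 0.

Definition density_op (rho : 'M[R[i]]_d) : Prop :=
  [/\ (forall i j, rho j i = (rho i j)^*),
      (forall v : 'cV[R[i]]_d, 0 <= cinner v (rho *m v)) &
      \tr rho = 1].

Definition orthonormal_basis (e : 'I_d -> 'cV[R[i]]_d) : Prop :=
  forall i j, cinner (e i) (e j) = (i == j)%:R.

Definition MUBs (M : nat) (e : 'I_M -> 'I_d -> 'cV[R[i]]_d) : Prop :=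
  (forall m, orthonormal_basis (e m)) /\
  (forall m n i j, m != n -> `|cinner (e m i) (e n j)| ^+ 2 = d%:R^-1).

(* p_{i_m} = <i_m|rho|i_m> (real since rho is Hermitian; we take its real part). *)
Definition prob (rho : 'M[R[i]]_d) (v : 'cV[R[i]]_d) : R :=
  complex.Re (cinner v (rho *m v)).

End Defs.

Definition xlog2x {R : realType} (x : R) : R :=
  if x == 0 then 0 else x * (ln x / ln 2).

Definition shannon {R : realType} {d : nat} (p : 'I_d -> R) : R :=
  - \sum_(i < d) xlog2x (p i).

(* Main.v *)
Require Import Defs.
From mathcomp Require Import all_boot all_order all_algebra.
From mathcomp Require Import complex reals exp.
From mathcomp Require Import boolp classical_sets topology normedtype derive realfun.
From mathcomp Require Import ring lra.
Import Order.TTheory GRing.Theory Num.Theory numFieldNormedType.Exports.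
Local Open Scope ring_scope.
Set Implicit Arguments. Unset Strict Implicit. Unset Printing Implicit Defensive.

Section S.
Lemma eq_le_of {T : realType} (a b : T) : a = b -> a <= b.
Proof. by move=> ->. Qed.
Variable R : realType.

Definition gg (al be : R) (x : R) := - (x * ln x) - al * x + be * x ^+ 2.
Definition ss (al be : R) (x : R) := - ln x - 1 - al + 2 * be * x.

Lemma ln_le_sub1 (x : R) : 0 < x -> ln x <= x - 1.
Proof.
move=> x0; have := @le_ln1Dx R (x - 1); rewrite [1 + _]addrC subrK; apply.
lra.
Qed.

Lemma is_derive_xlnx (x : R) : 0 < x -> is_derive x 1 (fun y : R => y * ln y) (1 + ln x).
Proof.
move=> x0.
have := is_deriveM (is_derive_id x 1) (is_derive1_ln x0).
move=> H.
apply: is_derive_eq.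
by rewrite [_%:A]mulr1 -[x *: _]/(x * x^-1) mulfV ?gt_eqF.
Qed.

Lemma is_derive_gg (al be x : R) : 0 < x -> is_derive x 1 (gg al be) (ss al be x).
Proof.
move=> x0; rewrite /gg /ss.
have H1 := is_derive_xlnx x0.
apply: is_derive_eq.
rewrite ![_%:A]mulr1 -[be *: _]/(be * _).
ring.
Qed.


Lemma mvt_R (f df : R -> R) (a b : R) : a < b ->
  (forall x, a <= x <= b -> is_derive x 1 f (df x)) ->
  exists2 c, a < c < b & f b - f a = df c * (b - a).
Proof.
move=> ab hd.
have hd' : forall x, x \in `]a, b[ -> is_derive x 1 f (df x).
  by move=> x; rewrite in_itv /= => /andP[/ltW ax /ltW xb]; apply: hd; rewrite ax xb.
have hc : {in `[a, b], forall x, derivable f x 1}.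
  by move=> x; rewrite in_itv /= => xi; have [] := hd x xi.
have [c cab ->] := MVT ab hd' (derivable_within_continuous hc).
by exists c => //; move: cab; rewrite in_itv.
Qed.

Lemma ln_ge_1subV (x : R) : 0 < x -> 1 - x^-1 <= ln x.
Proof.
move=> x0; have := ln_le_sub1 (x := x^-1); rewrite invr_gt0 => /(_ x0).
rewrite lnV ?posrE //; lra.
Qed.

Lemma ln_sub_ge (a b : R) : 0 < a -> 0 < b -> 1 - b / a <= ln a - ln b.
Proof.
move=> a0 b0; rewrite -ln_div ?posrE //.
have := ln_ge_1subV (x := a / b); rewrite divr_gt0 // => /(_ isT).
by rewrite invf_div.
Qed.

Lemma ln_sub_le (a b : R) : 0 < a -> 0 < b -> ln a - ln b <= a / b - 1.
Proof.
move=> a0 b0; rewrite -ln_div ?posrE //.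
by apply: ln_le_sub1; rewrite divr_gt0.
Qed.

Lemma ss_incr (al be a b : R) : 0 < a -> a <= b -> 1 <= 2 * be * a ->
  ss al be a <= ss al be b.
Proof.
move=> a0 ab hb; have b0 : 0 < b := lt_le_trans a0 ab.
have h := ln_sub_ge a0 b0.
have h2 : b / a - 1 <= 2 * be * (b - a).
  have -> : b / a - 1 = (b - a) / a by field; rewrite gt_eqF.
  rewrite ler_pdivrMr //.
  have : 0 <= (b - a) * (2 * be * a - 1) by apply: mulr_ge0; lra.
  lra.
rewrite /ss; lra.
Qed.

Lemma ss_decr (al be a b : R) : 0 < a -> a <= b -> 2 * be * b <= 1 ->
  ss al be b <= ss al be a.
Proof.
move=> a0 ab hb; have b0 : 0 < b := lt_le_trans a0 ab.
have h := ln_sub_ge b0 a0.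
have h2 : 2 * be * (b - a) <= 1 - a / b.
  have -> : 1 - a / b = (b - a) / b by field; rewrite gt_eqF.
  rewrite ler_pdivlMr //.
  have : 0 <= (b - a) * (1 - 2 * be * b) by apply: mulr_ge0; lra.
  lra.
rewrite /ss; lra.
Qed.

Lemma gg_mvt (al be a b : R) : 0 < a -> a < b ->
  exists2 c, a < c < b & gg al be b - gg al be a = ss al be c * (b - a).
Proof.
move=> a0 ab; apply: mvt_R => // x /andP[ax _].
by apply: is_derive_gg; apply: lt_le_trans ax.
Qed.

Lemma tangent_convex (al be x y : R) : 0 < x -> 0 < y ->
  1 <= 2 * be * x -> 1 <= 2 * be * y ->
  gg al be x + ss al be x * (y - x) <= gg al be y.
Proof.
move=> x0 y0 hx hy.
have [xy|yx|<-] := ltgtP x y; last by rewrite subrr mulr0 addr0.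
- have [c /andP[xc cy] e] := gg_mvt al be x0 xy.
  have := ss_incr al x0 (ltW xc) hx.
  have : 0 <= y - x by lra.
  move=> h1 h2; have := ler_wpM2r h1 h2; lra.
- have [c /andP[yc cx] e] := gg_mvt al be y0 yx.
  have c0 : 0 < c by apply: lt_trans yc.
  have hc : 1 <= 2 * be * c.
    apply: (le_trans hy); have : 0 <= be.
      have : 0 < 2 * be * y by lra.
      by rewrite pmulr_lgt0 // => /ltW; rewrite pmulr_rge0.
    move=> be0; rewrite ler_wpM2l //; [by rewrite mulr_ge0 | exact: ltW].
  have := ss_incr al c0 (ltW cx) hc.
  have : 0 <= x - y by lra.
  move=> h1 h2; have := ler_wpM2r h1 h2; lra.
Qed.

Lemma gg0 (al be : R) : gg al be 0 = 0.
Proof. by rewrite /gg !mul0r expr0n /= mulr0; lra. Qed.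

Lemma tangent_concave (al be x y : R) : 0 < x -> 0 <= y -> 0 <= be ->
  2 * be * x <= 1 -> 2 * be * y <= 1 ->
  gg al be y <= gg al be x + ss al be x * (y - x).
Proof.
move=> x0 y0 be0 hx hy.
have [<-|y0'] := eqVneq 0 y.
  rewrite gg0 /gg /ss.
  have : 0 <= x * (1 - be * x) by apply: mulr_ge0; lra.
  move=> h; rewrite expr2; lra.
have {}y0' : 0 < y by rewrite lt_neqAle y0' y0.
have [xy|yx|<-] := ltgtP x y; last by rewrite subrr mulr0 addr0.
- have [c /andP[xc cy] e] := gg_mvt al be x0 xy.
  have hc : 2 * be * c <= 1.
    apply: le_trans hy; rewrite ler_wpM2l ?mulr_ge0 //; exact: ltW.
  have := ss_decr al x0 (ltW xc) hc.
  have : 0 <= y - x by lra.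
  move=> h1 h2; have := ler_wpM2r h1 h2; lra.
- have [c /andP[yc cx] e] := gg_mvt al be y0' yx.
  have c0 : 0 < c by apply: lt_trans yc.
  have := ss_decr al c0 (ltW cx) hx.
  have : 0 <= x - y by lra.
  move=> h1 h2; have := ler_wpM2r h1 h2; lra.
Qed.

Lemma major (al be a b c d : R) : 0 <= c -> c <= a -> a <= b -> b <= d ->
  0 <= be -> 2 * be * d <= 1 -> a + b = c + d ->
  gg al be c + gg al be d <= gg al be a + gg al be b.
Proof.
move=> c0 ca ab bd be0 hd e.
have [a0|a0] := eqVneq a 0.
  have c0' : c = 0 by apply/eqP; rewrite eq_le c0 andbT -a0.
  have -> : d = b by move: e; rewrite a0 c0'; lra.
  by rewrite c0' a0.
have a0' : 0 < a by rewrite lt_neqAle eq_sym a0 (le_trans c0 ca).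
have b0 : 0 < b := lt_le_trans a0' ab.
have hb : 2 * be * b <= 1.
  apply: le_trans hd; rewrite ler_wpM2l ?mulr_ge0 //.
have ha : 2 * be * a <= 1 by apply: le_trans hb; rewrite ler_wpM2l ?mulr_ge0.
have hc : 2 * be * c <= 1 by apply: le_trans ha; rewrite ler_wpM2l ?mulr_ge0.
have t1 := tangent_concave al a0' c0 be0 ha hc.
have t2 := tangent_concave al b0 (le_trans (ltW a0') (le_trans ab bd)) be0 hb hd.
have hs := ss_decr al a0' ab hb.
have : 0 <= a - c by lra.
move=> h; have := ler_wpM2r h hs.
have e2 : d - b = a - c by lra.
rewrite e2 in t2; lra.
Qed.

Lemma major2 (al be a b c d : R) : 0 <= c -> c <= a -> c <= b -> a <= d -> b <= d ->
  0 <= be -> 2 * be * d <= 1 -> a + b = c + d ->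
  gg al be c + gg al be d <= gg al be a + gg al be b.
Proof.
move=> c0 ca cb ad bd be0 hd e.
have [ab|ba] := leP a b; first exact: major.
rewrite [gg al be a + _]addrC; apply: (@major al be b a c d) => //.
- exact: ltW.
- lra.
Qed.

Lemma small_set (al be : R) (r : seq R) : 0 < be ->
  all (fun y => (0 <= y) && (2 * be * y < 1)) r ->
  exists j : nat, exists t : R,
    [/\ 0 <= t, 2 * be * t < 1, \sum_(y <- r) y = j%:R / (2 * be) + t &
        j%:R * gg al be (1 / (2 * be)) + gg al be t <= \sum_(y <- r) gg al be y].
Proof.
move=> be0; elim: r => [|y r IH] /=.
  move=> _; exists 0%N, 0; rewrite !big_nil gg0 mulr0.
  by split; rewrite ?mul0r ?add0r ?addr0 ?ltr01.
move=> /andP[/andP[y0 hy] /IH [j [t [t0 ht es eg]]]].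
rewrite !big_cons.
have be2 : 0 < 2 * be by rewrite mulr_gt0.
have hw : 2 * be * (1 / (2 * be)) = 1 by rewrite mul1r mulfV // gt_eqF.
have [lt1|ge1] := ltP (2 * be * (t + y)) 1.
- exists j, (t + y); split => //.
  + exact: addr_ge0.
  + by rewrite es; lra.
  + have h1 : t <= t + y by lra.
    have h2 : y <= t + y by lra.
    have h3 : t + y = 0 + (t + y) by rewrite add0r.
    have := @major2 al be t y 0 (t + y) (lexx 0) t0 y0 h1 h2 (ltW be0) (ltW lt1) h3.
    rewrite gg0 add0r; lra.
- exists j.+1, (t + y - 1 / (2 * be)); split.
  + rewrite subr_ge0 -(ler_pM2l be2) hw //.
  + have : 2 * be * (t + y - 1 / (2 * be)) = 2 * be * t + 2 * be * y - 1.
      by rewrite !mulrDr mulrN hw.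
    move=> ->; lra.
  + rewrite es -addn1 natrD; field; rewrite gt_eqF //.
  + have hc : 0 <= t + y - 1 / (2 * be) by rewrite subr_ge0 -(ler_pM2l be2) hw.
    have hct : t + y - 1 / (2 * be) <= t.
      rewrite lerBlDr lerD2l -(ler_pM2l be2) hw; exact: ltW.
    have hcy : t + y - 1 / (2 * be) <= y.
      rewrite lerBlDr addrC lerD2l -(ler_pM2l be2) hw; exact: ltW.
    have htw : t <= 1 / (2 * be) by rewrite -(ler_pM2l be2) hw; exact: ltW.
    have hyw : y <= 1 / (2 * be) by rewrite -(ler_pM2l be2) hw; exact: ltW.
    have hsum : t + y = (t + y - 1 / (2 * be)) + 1 / (2 * be) by ring.
    have := major2 al hc hct hcy htw hyw (ltW be0) (eq_le_of hw) hsum.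
    rewrite -addn1 natrD; lra.
Qed.

Lemma jensen (al be x : R) (r : seq R) : 0 < x -> 1 <= 2 * be * x ->
  all (fun y => (0 < y) && (1 <= 2 * be * y)) r ->
  (size r)%:R * gg al be x + ss al be x * (\sum_(y <- r) y - (size r)%:R * x)
    <= \sum_(y <- r) gg al be y.
Proof.
move=> x0 hx; elim: r => [|y r IH] /=.
  by move=> _; rewrite !big_nil !mul0r subr0 mulr0 addr0.
move=> /andP[/andP[y0 hy] /IH h]; rewrite !big_cons.
have := tangent_convex al x0 y0 hx hy.
rewrite -addn1 natrD; lra.
Qed.

Lemma is_derive_lin (k x : R) : is_derive x 1 (fun y : R => 1 - k * y) (- k).
Proof. by apply: is_derive_eq; rewrite [_%:A]mulr1 add0r mul1r. Qed.

Lemma is_derive_ss (al be x : R) : 0 < x ->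
  is_derive x 1 (ss al be) (- x^-1 + 2 * be).
Proof.
move=> x0; rewrite /ss.
have := is_derive1_ln x0 => H.
by apply: is_derive_eq; rewrite [_%:A]mulr1 !subr0.
Qed.

Lemma is_derive_comp_lin (f : R -> R) (k x df : R) :
  is_derive (1 - k * x) 1 f df ->
  is_derive x 1 (fun y => f (1 - k * y)) (df * - k).
Proof.
move=> H; exact: (@is_derive1_comp _ f (fun y => 1 - k * y) x df (- k) H (is_derive_lin k x)).
Qed.

Lemma sign_pattern (E E1 : R -> R) (a b : R) :
  (forall x, a <= x <= b -> is_derive x 1 E (E1 x)) ->
  (forall x1 x2, a <= x1 -> x1 <= x2 -> x2 <= b -> E1 x2 <= E1 x1) ->
  E a = 0 -> forall c x, a <= c -> c <= x -> x <= b -> 0 <= E x -> 0 <= E c.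
Proof.
move=> hd hm ha c x ac cx xb hx.
have [ac'|ac'] := eqVneq a c; first by rewrite -ac' ha.
have {}ac' : a < c by rewrite lt_neqAle ac' ac.
rewrite leNgt; apply/negP => hc.
have [c1 /andP[ac1 c1c] e1] : exists2 c1, a < c1 < c & E c - E a = E1 c1 * (c - a).
  apply: mvt_R => // y /andP[ay yc]; apply: hd; rewrite ay /=.
  exact: le_trans yc (le_trans cx xb).
have h1 : E1 c1 < 0.
  move: e1; rewrite ha subr0 => e1.
  have : E1 c1 * (c - a) < 0 by rewrite -e1.
  by rewrite pmulr_llt0 // subr_gt0.
have [cx'|cx'] := eqVneq c x; first by move: hx; rewrite -cx' leNgt hc.
have {}cx' : c < x by rewrite lt_neqAle cx' cx.
have [c2 /andP[cc2 c2x] e2] : exists2 c2, c < c2 < x & E x - E c = E1 c2 * (x - c).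
  apply: mvt_R => // y /andP[cy yx]; apply: hd; rewrite (le_trans ac cy) /=.
  exact: le_trans yx xb.
have h2 : E1 c2 <= E1 c1.
  apply: hm; [exact: ltW | | exact: (le_trans (ltW c2x) xb)].
  exact: ltW (lt_trans c1c cc2).
have : E1 c2 * (x - c) < 0.
  by rewrite pmulr_llt0 ?subr_gt0 //; apply: le_lt_trans h1.
lra.
Qed.

Definition lk (k : R) := ln (k + 1) - ln k.
Definition alk (k : R) := ln k + (k + 1) * lk k.
Definition bek (k : R) := k * (k + 1) * lk k.

Lemma lk_lb (k : R) : 0 < k -> 1 <= (k + 1) * lk k.
Proof.
move=> k0; have k1 : 0 < k + 1 by lra.
have := ln_sub_ge k1 k0; rewrite /lk.
have -> : 1 - k / (k + 1) = (k + 1)^-1 by field; rewrite gt_eqF.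
by move=> h; have := ler_wpM2l (ltW k1) h; rewrite mulfV ?gt_eqF.
Qed.

Lemma lk_ub (k : R) : 0 < k -> k * lk k <= 1.
Proof.
move=> k0; have k1 : 0 < k + 1 by lra.
have := ln_sub_le k1 k0; rewrite /lk.
have -> : (k + 1) / k - 1 = k^-1 by field; rewrite gt_eqF.
by move=> h; have := ler_wpM2l (ltW k0) h; rewrite mulfV ?gt_eqF.
Qed.

Lemma G_lb_high (k z : R) : 0 < k -> 0 < z ->
  (1 - k * z) * (1 - (k + 1) * lk k) <= - ln z - alk k + bek k * z.
Proof.
move=> k0 z0; have := ln_le_sub1 (x := k * z); rewrite mulr_gt0 // => /(_ isT).
rewrite lnM ?posrE // /alk /bek => h; lra.
Qed.

Lemma G_lb_low (k z : R) : 0 < k -> 0 < z ->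
  (1 - (k + 1) * z) * (1 - k * lk k) <= - ln z - alk k + bek k * z.
Proof.
move=> k0 z0; have k1 : 0 < k + 1 by lra.
have := ln_le_sub1 (x := (k + 1) * z); rewrite mulr_gt0 // => /(_ isT).
rewrite lnM ?posrE // /alk /bek /lk => h; lra.
Qed.

Lemma gg_G (al be z : R) : gg al be z = z * (- ln z - al + be * z).
Proof. rewrite /gg; ring. Qed.

Lemma gg_nonneg_low (k t : R) : 0 < k -> 0 <= t -> (k + 1) * t <= 1 ->
  0 <= gg (alk k) (bek k) t.
Proof.
move=> k0 t0 ht.
have [<-|tn0] := eqVneq 0 t; first by rewrite gg0.
have {}t0 : 0 < t by rewrite lt_neqAle tn0 t0.
rewrite gg_G; apply: mulr_ge0; first exact: ltW.
apply: le_trans (G_lb_low k0 t0); apply: mulr_ge0; first lra.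
by have := lk_ub k0; lra.
Qed.

Lemma gg_nonneg_high (k t : R) : 0 < k -> 0 < t -> 1 <= k * t ->
  0 <= gg (alk k) (bek k) t.
Proof.
move=> k0 t0 ht.
rewrite gg_G; apply: mulr_ge0; first exact: ltW.
apply: le_trans (G_lb_high k0 t0).
have h1 := lk_lb k0.
have : 0 <= (k * t - 1) * ((k + 1) * lk k - 1) by apply: mulr_ge0; lra.
lra.
Qed.

Section TV.
Variable k : R.
Hypothesis k1 : 1 <= k.
Let al := alk k.
Let be := bek k.
Let k0 : 0 < k. Proof. exact: lt_le_trans ltr01 k1. Qed.

Definition Ek x := ss al be x - ss al be (1 - k * x).
Definition E1k x := (- x^-1 + 2 * be) - (- (1 - k * x)^-1 + 2 * be) * - k.
Definition Dk x := k * gg al be x + gg al be (1 - k * x).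

Lemma is_derive_Ek x : 0 < x -> k * x < 1 -> is_derive x 1 Ek (E1k x).
Proof.
move=> x0 kx; rewrite /Ek /E1k.
have H1 := is_derive_ss al be x0.
have H2 := is_derive_comp_lin (is_derive_ss al be (x := 1 - k * x) ltac:(lra)).
exact: is_deriveB.
Qed.

Lemma is_derive_Dk x : 0 < x -> k * x < 1 -> is_derive x 1 Dk (k * Ek x).
Proof.
move=> x0 kx; rewrite /Dk /Ek.
have H1 := is_derive_gg al be x0.
have H2 := is_derive_comp_lin (is_derive_gg al be (x := 1 - k * x) ltac:(lra)).
by apply: is_derive_eq; rewrite -[k *: _]/(k * _); ring.
Qed.

Lemma E1k_mono x1 x2 : 1 <= (k + 1) * x1 -> x1 <= x2 -> k * x2 < 1 ->
  E1k x2 <= E1k x1.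
Proof.
move=> h1 h12 h2.
have x10 : 0 < x1.
  have h : 0 < (k + 1) * x1 by lra.
  have kk : 0 < k + 1 by apply: (lt_trans k0); rewrite ltrDl.
  by move: h; rewrite pmulr_rgt0.
have x20 : 0 < x2 := lt_le_trans x10 h12.
have y10 : 0 < 1 - k * x1.
  have : k * x1 <= k * x2 by rewrite ler_wpM2l //; exact: ltW.
  lra.
have y20 : 0 < 1 - k * x2 by lra.
have e : E1k x1 - E1k x2 =
  (x2 - x1) * (k ^+ 2 * x1 * x2 - (1 - k * x1) * (1 - k * x2)) /
  (x1 * x2 * (1 - k * x1) * (1 - k * x2)).
  rewrite /E1k; field.
  by rewrite !gt_eqF.
have hy1 : 1 - k * x1 <= x1 by lra.
have hy2 : 1 - k * x2 <= x2.
  have : k * x1 <= k * x2 by rewrite ler_wpM2l //; exact: ltW.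
  lra.
have hp : (1 - k * x1) * (1 - k * x2) <= x1 * x2 by apply: ler_pM => //; exact: ltW.
have hk2 : x1 * x2 <= k ^+ 2 * x1 * x2.
  rewrite -mulrA ler_pMl ?mulr_gt0 //.
  rewrite expr2; have : 1 * 1 <= k * k by apply: ler_pM.
  by rewrite mulr1.
have : 0 <= E1k x1 - E1k x2.
  rewrite e; apply: divr_ge0; first by apply: mulr_ge0; lra.
  by rewrite !mulr_ge0 // ltW.
lra.
Qed.

Lemma Dk_nonneg x : 1 <= (k + 1) * x -> k * x < 1 -> 0 <= Dk x.
Proof.
move=> hx kx.
have kk : 0 < k + 1 by apply: (lt_trans k0); rewrite ltrDl.
set u := (k + 1)^-1.
have u0 : 0 < u by rewrite invr_gt0.
have hu : (k + 1) * u = 1 by rewrite mulfV ?gt_eqF.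
have e1u : 1 - k * u = u by rewrite /u; field; rewrite gt_eqF.
have ku : k * u < 1 by lra.
have Eu : Ek u = 0 by rewrite /Ek e1u subrr.
have Du : 0 <= Dk u.
  rewrite /Dk e1u; apply: addr_ge0; last by apply: gg_nonneg_low; rewrite ?hu // ltW.
  by apply: mulr_ge0; [exact: ltW | apply: gg_nonneg_low; rewrite ?hu // ltW].
have ux : u <= x.
  by rewrite -(ler_pM2l kk) hu.
have hd b : k * b < 1 -> forall y, u <= y <= b -> is_derive y 1 Ek (E1k y).
  move=> kb y /andP[uy yb]; apply: is_derive_Ek; first exact: lt_le_trans uy.
  apply: le_lt_trans kb; rewrite ler_wpM2l //; exact: ltW.
have hm b : forall x1 x2, u <= x1 -> x1 <= x2 -> x2 <= b -> k * b < 1 -> E1k x2 <= E1k x1.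
  move=> x1 x2 ux1 x12 x2b kb; apply: E1k_mono => //.
    by rewrite -[X in X <= _]hu ler_wpM2l // ltW.
  apply: le_lt_trans kb; rewrite ler_wpM2l //; exact: ltW.
have hdD y : u <= y -> k * y < 1 -> is_derive y 1 Dk (k * Ek y).
  by move=> uy ky; apply: is_derive_Dk => //; exact: lt_le_trans uy.
have [Ex|Ex] := leP 0 (Ek x).
  have [ex|ex] := eqVneq u x; first by rewrite -ex.
  have {}ex : u < x by rewrite lt_neqAle ex ux.
  have [c /andP[uc cx] e] : exists2 c, u < c < x & Dk x - Dk u = k * Ek c * (x - u).
    apply: mvt_R => // y /andP[uy yx]; apply: hdD => //.
    apply: le_lt_trans kx; rewrite ler_wpM2l //; exact: ltW.
  have Ec : 0 <= Ek c := @sign_pattern Ek E1k u x (hd x kx)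
    (fun x1 x2 h1 h2 h3 => hm x x1 x2 h1 h2 h3 kx) Eu c x (ltW uc) (ltW cx) (lexx x) Ex.
  have : 0 <= k * Ek c * (x - u) by rewrite !mulr_ge0 // ?subr_ge0 // ltW.
  lra.
have mono z : x < z -> k * z < 1 -> Dk z <= Dk x.
  move=> xz kz.
  have [c /andP[xc cz] e] : exists2 c, x < c < z & Dk z - Dk x = k * Ek c * (z - x).
    apply: mvt_R => // y /andP[xy yz]; apply: hdD; first exact: le_trans xy.
    apply: le_lt_trans kz; rewrite ler_wpM2l //; exact: ltW.
  have Ec : Ek c < 0.
    rewrite ltNge; apply/negP => Ec.
    have : 0 <= Ek x := @sign_pattern Ek E1k u z (hd z kz)
      (fun x1 x2 h1 h2 h3 => hm z x1 x2 h1 h2 h3 kz) Eu x c ux (ltW xc) (ltW cz) Ec.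
    by rewrite leNgt Ex.
  have : k * Ek c * (z - x) <= 0.
    rewrite -mulrA pmulr_rle0 //; apply: mulr_le0_ge0; [exact: ltW | ].
    by rewrite subr_ge0 ltW.
  lra.
have bound z : x < z -> k * z < 1 -> (1 - k * z) * (1 - (k + 1) * lk k) <= Dk z.
  move=> xz kz.
  have z0 : 0 < z by apply: lt_le_trans u0 (le_trans ux (ltW xz)).
  have hz : 1 <= (k + 1) * z by rewrite -[X in X <= _]hu ler_wpM2l // ltW // (le_lt_trans ux xz).
  have g2 : 0 <= gg al be (1 - k * z).
    have := ler_wpM2l (ltW k0) hz => hh.
    apply: gg_nonneg_low => //; lra.
  have hG := G_lb_high k0 z0.
  have kz0 : 0 <= k * z by rewrite mulr_ge0 // ltW.
  have := ler_wpM2l kz0 hG.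
  have hl := lk_lb k0.
  have : 0 <= (1 - k * z) * ((1 - k * z) * ((k + 1) * lk k - 1)).
    by apply: mulr_ge0; [lra | apply: mulr_ge0; lra].
  rewrite /Dk gg_G /al /be; lra.
rewrite leNgt; apply/negP => Dx.
have [c0 ec0] : exists c0, c0 = (k + 1) * lk k - 1 by eexists.
have c0p : 0 <= c0 by have := lk_lb k0; lra.
have [m em] : exists m, m = - Dk x by eexists.
have m0 : 0 < m by rewrite em oppr_gt0.
set d := Num.min ((1 - k * x) / 2) (m / (c0 + 1)).
have d0 : 0 < d by rewrite lt_min !divr_gt0 //; lra.
have d1 : d <= (1 - k * x) / 2 by rewrite ge_min lexx.
have d2 : d <= m / (c0 + 1) by rewrite ge_min lexx orbT.
set z := (1 - d) / k.
have kz : k * z = 1 - d by rewrite /z; field; rewrite gt_eqF.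
have xz : x < z by rewrite -(ltr_pM2l k0) kz; lra.
have := mono z xz ltac:(lra).
have := bound z xz ltac:(lra).
rewrite kz (_ : 1 - (k + 1) * lk k = - c0); last by lra.
have : m / (c0 + 1) * c0 = m - m / (c0 + 1) by field; lra.
have : 0 < m / (c0 + 1) by rewrite divr_gt0 //; lra.
have : d * c0 <= m / (c0 + 1) * c0 by rewrite ler_wpM2r.
lra.
Qed.
End TV.

Lemma sum_nseq (F : R -> R) (j : nat) (a : R) :
  \sum_(y <- nseq j a) F y = j%:R * F a.
Proof.
elim: j => [|j IH]; first by rewrite big_nil mul0r.
by rewrite /= big_cons IH -addn1 natrD; ring.
Qed.

Lemma sum_ge_size (r : seq R) (w : R) : all (fun y => w <= y) r ->
  (size r)%:R * w <= \sum_(y <- r) y.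
Proof.
elim: r => [|y r IH] /=; first by rewrite big_nil mul0r.
move=> /andP[hy /IH h]; rewrite big_cons -addn1 natrD; lra.
Qed.

End S.

Section S2.
Variable R : realType.
Lemma entropy_line (k : nat) (r : seq R) : (1 <= k)%N ->
  all (fun y => 0 <= y) r -> \sum_(y <- r) y = 1 ->
  0 <= \sum_(y <- r) gg (alk k%:R) (bek k%:R) y.
Proof.
move=> k1 r0 r1.
set K := k%:R.
have K1 : 1 <= K by rewrite /K ler1n.
have K0 : 0 < K by lra.
set al := alk K; set be := bek K.
have hl := lk_lb K0.
have beK : K <= be.
  rewrite /be /bek -mulrA; rewrite -{1}(mulr1 K) ler_wpM2l //; lra.
have be0 : 0 < be by lra.
have be2 : 0 < 2 * be by lra.
set w := 1 / (2 * be).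
have hw : 2 * be * w = 1 by rewrite /w mul1r mulfV // gt_eqF.
have w0 : 0 < w by rewrite /w divr_gt0.
have wK : (K + 1) * w <= 1.
  have : K + 1 <= 2 * be by lra.
  move=> h; have := ler_wpM2r (ltW w0) h; lra.
set P := fun y : R => 1 <= 2 * be * y.
set rA := [seq y <- r | P y]; set rB := [seq y <- r | ~~ P y].
have split (F : R -> R) : \sum_(y <- r) F y = \sum_(y <- rA) F y + \sum_(y <- rB) F y.
  by rewrite (bigID P) /= /rA /rB !big_filter.
have sAB : \sum_(y <- rA) y + \sum_(y <- rB) y = 1 by rewrite -split.
rewrite split.
have hB : all (fun y => (0 <= y) && (2 * be * y < 1)) rB.
  apply/allP => y; rewrite mem_filter => /andP[hy yr].
  by rewrite (allP r0 y yr) /= ltNge.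
have [j [t [t0 ht es eg]]] := small_set al be0 hB.
set rA' := rA ++ nseq j w.
have hA : all (fun y => (0 < y) && (1 <= 2 * be * y)) rA'.
  apply/allP => y; rewrite mem_cat => /orP[].
    rewrite mem_filter => /andP[hy _]; rewrite /P in hy; rewrite hy andbT.
    have : 0 < 2 * be * y by apply: lt_le_trans hy.
    by rewrite pmulr_rgt0.
  by move=> /nseqP[-> _]; rewrite w0 hw lexx.
have hA' : all (fun y => w <= y) rA'.
  apply/allP => y yA; have /andP[_ hy] := allP hA y yA.
  by rewrite -(ler_pM2l be2) hw.
set N := size rA'.
set S := \sum_(y <- rA') y.
have eS : S = \sum_(y <- rA) y + j%:R * w by rewrite /S big_cat sum_nseq.
have eSt : S + t = 1.
  by move: sAB; rewrite eS es /w mul1r; lra.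
have tK : (K + 1) * t <= 1.
  have : t <= w by rewrite -(ler_pM2l be2) hw ltW.
  move=> h; have := ler_wpM2l (_ : 0 <= K + 1) h; lra.
have tw : t < w by rewrite -(ltr_pM2l be2) hw.
have N0 : (0 < N)%N.
  rewrite lt0n; apply/negP => /eqP /size0nil e.
  have S0 : S = 0 by rewrite /S e big_nil.
  have t1 : t = 1 by lra.
  by move: ht; rewrite t1 mulr1; lra.
have NR0 : 0 < N%:R :> R by rewrite ltr0n.
set x := S / N%:R.
have eNx : N%:R * x = S by rewrite /x mulrC divfK // gt_eqF.
have xw : w <= x.
  have := sum_ge_size hA'; rewrite -/N -/S => h.
  by rewrite /x ler_pdivlMr // mulrC.
have x0 : 0 < x := lt_le_trans w0 xw.
have jen := jensen al x0 (_ : 1 <= 2 * be * x) hA.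
have {}jen : N%:R * gg al be x <= \sum_(y <- rA) gg al be y + j%:R * gg al be w.
  have e : \sum_(y <- rA') gg al be y = \sum_(y <- rA) gg al be y + j%:R * gg al be w.
    by rewrite big_cat sum_nseq.
  rewrite -e.
  have : 1 <= 2 * be * x by rewrite -[X in X <= _]hw ler_wpM2l // ltW.
  move=> /jen; rewrite -/rA' -/N -/S eNx subrr mulr0 addr0.
  done.
have gt0 : 0 <= gg al be t by apply: gg_nonneg_low.
have hfin : 0 <= N%:R * gg al be x + gg al be t.
  have [hx1|hx1] := leP ((K + 1) * x) 1.
    by apply: addr_ge0 => //; apply: mulr_ge0; [exact: ltW | apply: gg_nonneg_low => //; exact: ltW].
  have [hx2|hx2] := leP 1 (K * x).
    by apply: addr_ge0 => //; apply: mulr_ge0; [exact: ltW | apply: gg_nonneg_high].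
  have NK : N = k.
    apply/eqP; rewrite eqn_leq; apply/andP; split.
      rewrite -ltnS -(ltr_nat R) -addn1 natrD -/K.
      rewrite ltNge; apply/negP => h.
      have := ler_wpM2r (ltW x0) h; lra.
    rewrite -ltnS -(ltr_nat R) -addn1 natrD -/K.
    rewrite ltNge; apply/negP => h.
    have h' : N%:R <= K - 1 by lra.
    have := ler_wpM2r (ltW x0) h'; lra.
  have := Dk_nonneg K1 (ltW hx1) hx2.
  rewrite /Dk (_ : 1 - K * x = t); last by move: eNx; rewrite NK -/K; lra.
  by rewrite NK.
rewrite /w in jen; lra.
Qed.
End S2.

Lemma Re_sum (R : realType) (I : Type) (r : seq I) (F : I -> R[i]) :
  complex.Re (\sum_(i <- r) F i) = \sum_(i <- r) complex.Re (F i).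
Proof.
elim: r => [|x r IH]; first by rewrite !big_nil.
by rewrite !big_cons -IH; case: (F x); case: (\sum_(i <- r) F i).
Qed.

Lemma prob_props (R : realType) (d : nat) (rho : 'M[R[i]]_d)
  (e : 'I_d -> 'cV[R[i]]_d) : density_op rho -> orthonormal_basis e ->
  (forall i, 0 <= prob rho (e i)) /\ \sum_i prob rho (e i) = 1.
Proof.
case=> _ psd tr1 ortho; split.
  by move=> i; have := psd (e i); rewrite lecE => /andP[_ h].
pose U : 'M[R[i]]_d := \matrix_(k, i) e i k 0.
pose V : 'M[R[i]]_d := \matrix_(i, k) (e i k 0)^*.
have VU : V *m U = 1%:M.
  apply/matrixP => i j; rewrite !mxE -(ortho i j) /cinner.
  by apply: eq_bigr => k _; rewrite !mxE.
have UV := mulmx1C VU.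
have h : \sum_i cinner (e i) (rho *m e i) = \tr (V *m (rho *m U)).
  rewrite /mxtrace; apply: eq_bigr => i _; rewrite /cinner !mxE.
  apply: eq_bigr => k _; rewrite !mxE; congr (_ * _).
  by apply: eq_bigr => l _; rewrite mxE.
have h2 : \tr (V *m (rho *m U)) = 1 by rewrite mxtrace_mulC -mulmxA UV mulmx1.
by rewrite /prob -Re_sum h h2.
Qed.

Lemma xlogE (R : realType) (x : R) : xlog2x x = x * ln x / ln 2.
Proof. by rewrite /xlog2x; case: eqP => [->|_]; rewrite ?mul0r // mulrA. Qed.

Lemma shannonE (R : realType) (d : nat) (p : 'I_d -> R) :
  shannon p = (\sum_(i < d) - (p i * ln (p i))) / ln 2.
Proof.
rewrite /shannon mulr_suml -sumrN; apply: eq_bigr => i _.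
by rewrite xlogE mulNr.
Qed.

Theorem theorem2 (R : realType) (d M : nat) (rho : 'M[R[i]]_d)
    (e : 'I_M -> 'I_d -> 'cV[R[i]]_d) (C : R) :
  (2 <= d)%N ->
  density_op rho ->
  MUBs e ->
  0 < C ->
  \sum_(m < M) \sum_(i < d) prob rho (e m i) ^+ 2 <= C ->
  let K : int := Num.floor (M%:R / C) in
  let a : R := M%:R / C - K%:~R in
  \sum_(m < M) shannon (fun i => prob rho (e m i)) >=
    a * C * xlog2x (K%:~R + 1) + (1 - a) * C * xlog2x (K%:~R).
Proof.
move=> d2 hrho [hon _] C0 hC; cbv zeta.
set K := Num.floor _.
have hp m := prob_props hrho (hon m).
have l2 : 0 < ln (2 : R) by apply: ln_gt0; rewrite ltr1n.
have K0 : (0 <= K)%R by rewrite /K floor_ge0 divr_ge0 // ltW.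
have [n Kn] : exists n : nat, K = n%:Z by case: K K0 => [n _|//]; exists n.
rewrite Kn -pmulrn.
set a' := M%:R / C - n%:R.
under eq_bigr do rewrite shannonE.
rewrite -mulr_suml !xlogE.
set ent := \sum_(m < M) _.
suff h : a' * C * ((n%:R + 1) * ln (n%:R + 1)) + (1 - a') * C * (n%:R * ln n%:R) <= ent.
  have il : 0 <= (ln (2 : R))^-1 by rewrite invr_ge0 ltW.
  have := ler_wpM2r il h.
  by congr (_ <= _); ring.
have qle1 m i : prob rho (e m i) <= 1.
  have [h0 h1] := hp m; rewrite -h1 (bigD1 i) //= lerDl.
  by apply: sumr_ge0 => j _.
have [n0|n1] := eqVneq n 0%N.
  rewrite n0 add0r ln1 !mulr0 !mul0r mulr0 add0r.
  apply: sumr_ge0 => m _; apply: sumr_ge0 => i _.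
  rewrite oppr_ge0; apply: mulr_ge0_le0; first by case: (hp m).
  exact: ln_le0.
have {}n1 : (1 <= n)%N by rewrite lt0n.
set N := n%:R : R.
have line m : alk N - bek N * \sum_(i < d) prob rho (e m i) ^+ 2 <=
    \sum_(i < d) - (prob rho (e m i) * ln (prob rho (e m i))).
  have [h0 h1] := hp m.
  have := @entropy_line R n [seq prob rho (e m i) | i <- index_enum 'I_d] n1.
  rewrite !big_map => /(_ _ h1).
  have hall : all (fun y => 0 <= y) [seq prob rho (e m i) | i <- index_enum 'I_d].
    by apply/allP => y /mapP[i _ ->].
  move=> /(_ hall) hl.
  have ee : forall y : R, - (y * ln y) = gg (alk N) (bek N) y + (alk N * y - bek N * y ^+ 2).
    by move=> y; rewrite /gg; ring.
  rewrite [X in _ <= X](eq_bigr _ (fun i _ => ee _)).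
  rewrite big_split sumrB -!mulr_sumr /= h1 mulr1.
  lra.
have sline : M%:R * alk N - bek N * C <= ent.
  have := @ler_sum _ _ (index_enum 'I_M) (fun _ => true) _ _ (fun m _ => line m).
  rewrite sumrB -mulr_sumr sumr_const card_ord => h.
  have hb : 0 <= bek N.
    have N0 : 0 < N by rewrite /N ltr0n.
    rewrite /bek -mulrA; apply: mulr_ge0; first exact: ltW.
    have := lk_lb N0; lra.
  have := ler_wpM2l hb hC.
  rewrite -[_ *+ M]mulr_natl in h.
  rewrite /ent; lra.
have eM : M%:R = C * (N + a') by rewrite /a'; field; rewrite gt_eqF.
apply: le_trans sline.
rewrite eM /alk /bek /lk le_eqVlt; apply/orP; left; apply/eqP; ring.
Qed.
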